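(* Let $1\le q\le p<\infty$. The operator ideal $\Pi^{mid}_{p;q}$ of absolutely mid $(p;q)$-summing operators is injective, and the operator ideals $W^{mid}_{p;q}$ of weakly mid $(p;q)$-summing operators and $\mathcal{D}^{mid}_p$ of Cohen mid $p$-summing operators are regular.
   Context: For a Banach space $X$: $\ell_r(X)$ absolutely $r$-summable sequences; $\ell_r^w(X)$ sequences with $\sup_{x^*\in B_{X^*}}\|(x^*(x_j))_j\|_r<\infty$; $\ell_r^{mid}(X)$ ($r<\infty$) the $(x_j)\in\ell_r^w(X)$ with $\sum_n\sum_j|x_n^*(x_j)|^r<\infty$ for all $(x_n^* )\in\ell_r^w(X^* )$; $\ell_p\langle X\rangle$ the $(x_j)$ with $\sup_{(x_j^* )\in B_{\ell_{p^*}^w(X^* )}}\sum_j|x_j^*(x_j)|<\infty$, $1/p+1/p^*=1$. A bounded linear $T\colon E\to F$ is absolutely mid $(p;q)$-summing if $(T(x_j))\in\ell_p(F)$ whenever $(x_j)\in\ell_q^{mid}(E)$; weakly mid $(p;q)$-summing if $(T(x_j))\in\ell_p^{mid}(F)$ whenever $(x_j)\in\ell_q^w(E)$; Cohen mid $p$-summing if $(T(x_j))\in\ell_p\langle F\rangle$ whenever $(x_j)\in\ell_p^{mid}(E)$. An operator ideal $\mathcal{I}$ is injective if $u\in\mathcal{I}(E,F)$ whenever $v\in\mathcal{L}(F,G)$ is a metric injection ($\|v(y)\|=\|y\|$ for all $y$) with $v\circ u\in\mathcal{I}(E,G)$; it is regular if $u\in\mathcal{I}(E,F)$ whenever $J_F\circ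 u\in\mathcal{I}(E,F^{**})$, $J_F\colon F\to F^{**}$ the canonical embedding. *)

(* Defs.v *)
From HB Require Import structures.
From mathcomp Require Import all_boot all_order all_algebra.
From mathcomp Require Import all_classical all_reals all_analysis.
Unset Implicit Arguments. Unset Strict Implicit. Unset Printing Implicit Defensive.
Import Order.TTheory GRing.Theory Num.Theory.
Import numFieldNormedType.Exports.
Local Open Scope classical_set_scope.
Local Open Scope ring_scope.

(* A normed space presented concretely: a carrier vector space, the subspace
   of its elements forming the space, and the norm.  This lets us form duals
   (and biduals, triduals, ...) as spaces of functions without re-proving the
   normed-module axioms. *)
Record nspace (R : realType) := NSpace {
  ncar : lmodType R;
  nmem : set ncar;
  nnorm : ncar -> R }.
Arguments NSpace {R} ncar nmem nnorm.
Arguments ncar {R} n.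
Arguments nmem {R} n _.
Arguments nnorm {R} n _.

Section defs.
Context {R : realType}.

Definition lin_on (U V : lmodType R) (S : set U) (f : U -> V) : Prop :=
  forall (a : R) (x y : U), S x -> S y -> f (a *: x + y) = a *: f x + f y.

Definition dual_mem (X : nspace R) : set (ncar X -> R^o) :=
  fun f => lin_on _ _ (nmem X) f /\
    exists C : R, forall x, nmem X x -> `|f x| <= C * nnorm X x.

Definition dual_norm (X : nspace R) (f : ncar X -> R^o) : R :=
  sup [set `|f x| | x in [set x | nmem X x /\ nnorm X x <= 1]].

Definition dual (X : nspace R) : nspace R :=
  NSpace (ncar X -> R^o) (dual_mem X) (dual_norm X).

Definition dual_ball (X : nspace R) : set (ncar X -> R^o) :=
  [set f | dual_mem X f /\ dual_norm X f <= 1].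

Definition bspace (E : normedModType R) : nspace R :=
  NSpace E setT (fun x => `|x|).

Definition bidual_emb (X : nspace R) (y : ncar X) : ncar (dual (dual X)) :=
  fun f : ncar X -> R^o => f y.

Definition bop (X Y : nspace R) (u : ncar X -> ncar Y) : Prop :=
  (forall x, nmem X x -> nmem Y (u x)) /\ lin_on _ _ (nmem X) u /\
  exists C : R, forall x, nmem X x -> nnorm Y (u x) <= C * nnorm X x.

Definition metric_injection (X Y : nspace R) (v : ncar X -> ncar Y) : Prop :=
  bop X Y v /\ forall y, nmem X y -> nnorm Y (v y) = nnorm X y.

Definition conj_exp (p : R) : \bar R :=
  if p == 1 then +oo%E else (p / (p - 1))%:E.

(* ||(x_j)||_{w,r} <= C : for all x^* in B_{X^*}, ||(x^*(x_j))_j||_r <= C *)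
Definition weak_bound (X : nspace R) (r : \bar R) (x : nat -> ncar X) (C : R)
  : Prop :=
  forall f, dual_ball X f ->
    match r with
    | r'%:E => forall N : nat, (\sum_(j < N) `|f (x j)| `^ r') `^ r'^-1 <= C
    | +oo%E => forall j, `|f (x j)| <= C
    | -oo%E => False
    end.

Definition lp_seq (X : nspace R) (r : R) (x : nat -> ncar X) : Prop :=
  (forall j, nmem X (x j)) /\
  exists M : R, forall N : nat, \sum_(j < N) nnorm X (x j) `^ r <= M.

Definition lw_seq (X : nspace R) (r : \bar R) (x : nat -> ncar X) : Prop :=
  (forall j, nmem X (x j)) /\ exists C : R, weak_bound X r x C.

Definition lmid_seq (X : nspace R) (r : R) (x : nat -> ncar X) : Prop :=
  lw_seq X r%:E x /\
  forall xs : nat -> ncar (dual X), lw_seq (dual X) r%:E xs ->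
    exists M : R, forall N K : nat,
      \sum_(n < N) \sum_(j < K) `|xs n (x j)| `^ r <= M.

Definition cohen_seq (X : nspace R) (p : R) (x : nat -> ncar X) : Prop :=
  (forall j, nmem X (x j)) /\
  exists M : R, forall ys : nat -> ncar (dual X),
    lw_seq (dual X) (conj_exp p) ys ->
    weak_bound (dual X) (conj_exp p) ys 1 ->
    forall N : nat, \sum_(j < N) `|ys j (x j)| <= M.

Definition abs_mid_summing (p q : R) (X Y : nspace R) (u : ncar X -> ncar Y)
  : Prop :=
  bop X Y u /\ forall x, lmid_seq X q x -> lp_seq Y p (u \o x).

Definition weak_mid_summing (p q : R) (X Y : nspace R) (u : ncar X -> ncar Y)
  : Prop :=
  bop X Y u /\ forall x, lw_seq X q%:E x -> lmid_seq Y p (u \o x).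

Definition cohen_mid_summing (p : R) (X Y : nspace R) (u : ncar X -> ncar Y)
  : Prop :=
  bop X Y u /\ forall x, lmid_seq X p x -> cohen_seq Y p (u \o x).

End defs.

(* Main.v *)
Require Import Defs.
From HB Require Import structures.
From mathcomp Require Import all_boot all_order all_algebra.
From mathcomp Require Import all_classical all_reals all_analysis.
From mathcomp Require Import ring lra.
Import Order.TTheory GRing.Theory Num.Theory.
Import numFieldNormedType.Exports.
Local Open Scope ring_scope.
Local Open Scope classical_set_scope.

Section S.
Context {R : realType}.

Definition nice (Y : nspace R) : Prop :=
  [/\ nmem Y 0,
      (forall (a : R) x y, nmem Y x -> nmem Y y -> nmem Y (a *: x + y)),
      (forall (a : R) x, nmem Y x -> nnorm Y (a *: x) <= `|a| * nnorm Y x) &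
      (forall x, nmem Y x -> 0 <= nnorm Y x)].

Lemma sup_le {E : set R} {b} : (forall y, E y -> y <= b) -> 0 <= b -> sup E <= b.
Proof.
move=> hE hb; have [->|hne] := eqVneq E set0; first by rewrite sup0.
by apply: ge_sup => //; apply/set0P.
Qed.

Lemma le_sup {E : set R} {B y : R} : (forall z, E z -> z <= B) -> E y -> y <= sup E.
Proof. by move=> hB hy; apply: ub_le_sup => //; exists B. Qed.

Lemma sup_ge0 {E : set R} {B} : (forall z, E z -> z <= B) ->
  (forall z, E z -> 0 <= z) -> 0 <= sup E.
Proof.
move=> hB h0; have [->|/set0P [y hy]] := eqVneq E set0; first by rewrite sup0.
apply: (le_trans (h0 _ hy)); exact: (le_sup hB hy).
Qed.

Lemma linZ {U V : lmodType R} {S : set U} {f : U -> V} a {x} :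
  lin_on U V S f -> S 0 -> S x -> f (a *: x) = a *: f x.
Proof.
move=> hf h0 hx.
have f0 : f 0 = 0.
  have := hf 1 0 0 h0 h0; rewrite scale1r addr0 scale1r => h.
  by apply/esym/(addrI (f 0)); rewrite addr0 -h.
by have := hf a x 0 hx h0; rewrite addr0 f0 addr0.
Qed.



Lemma dual_bnd {Y : nspace R} {f} : nice Y -> dual_mem Y f -> exists B,
  forall z, [set `|f x| | x in [set x | nmem Y x /\ nnorm Y x <= 1]] z -> z <= B.
Proof.
move=> [h0 hc hs hn] [hl [C hC]]; exists `|C| => _ [x [hx1 hx2] <-].
apply: le_trans (hC _ hx1) _.
apply: le_trans (ler_norm _) _; rewrite normrM.
have := hn _ hx1 => n0.
by rewrite [`|nnorm _ _|]ger0_norm // ler_piMr.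
Qed.

Lemma dual_norm_ge0 {Y : nspace R} {f} : nice Y -> dual_mem Y f -> 0 <= dual_norm Y f.
Proof.
move=> hY hf; have [B hB] := dual_bnd hY hf.
by apply: sup_ge0 hB _ => _ [x _ <-].
Qed.

Lemma K {Y : nspace R} {f x} : nice Y -> dual_mem Y f -> nmem Y x ->
  `|f x| <= dual_norm Y f * nnorm Y x.
Proof.
move=> hY hf hx; have [h0 hc hs hn] := hY; have [hl [C hC]] := hf.
have := hn _ hx; rewrite le_eqVlt => /orP [/eqP t0|tp].
  have := hC _ hx; rewrite -t0 !mulr0 => h.
  by rewrite (le_trans h).
set t := nnorm Y x in tp *.
have hz : nmem Y (t^-1 *: x) by rewrite -[_ *: x]addr0; exact: hc.
have hzn : nnorm Y (t^-1 *: x) <= 1.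
  apply: le_trans (hs _ _ hx) _.
  by rewrite gtr0_norm ?invr_gt0 // mulVf // gt_eqF.
have fz : f (t^-1 *: x) = t^-1 * f x by rewrite (linZ _ hl).
have [B hB] := dual_bnd hY hf.
have := le_sup hB (ex_intro2 _ _ (t^-1 *: x) (conj hz hzn) erefl).
rewrite fz normrM gtr0_norm ?invr_gt0 // => h.
rewrite mulrC -ler_pdivrMl //.
Qed.


Lemma dual0E (X : nspace R) x : (0 : ncar (dual X)) x = 0 :> R.
Proof. by []. Qed.

Lemma evalE (X : nspace R) (a : R) (f g : ncar (dual X)) x :
  (a *: f + g) x = a * f x + g x.
Proof. by []. Qed.

Lemma nice_dual {Y : nspace R} : nice Y -> nice (dual Y).
Proof.
move=> hY; have [h0 hc hs hn] := hY; split.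
- split; first by move=> a x y _ _; rewrite !dual0E /GRing.scale /= mulr0 addr0.
  by exists 0 => x _; rewrite dual0E normr0 mul0r.
- move=> a f g [hfl [Cf hCf]] [hgl [Cg hCg]]; split.
    move=> b x y hx hy /=.
    by rewrite !evalE hfl // hgl // /GRing.scale /=; ring.
  exists (`|a| * Cf + Cg) => x hx /=.
  apply: le_trans (ler_normD _ _) _.
  rewrite normrM mulrDl -mulrA lerD //; last exact: hCg.
  by apply: ler_wpM2l => //; apply: hCf.
- move=> a f hf; have [B hB] := dual_bnd hY hf.
  apply: sup_le; last by rewrite mulr_ge0 // dual_norm_ge0.
  move=> _ [x hx <-] /=; rewrite normrM ler_wpM2l //.
  rewrite /dual_norm; apply: le_sup. exact: hB. by exists x.
- by move=> f hf; apply: dual_norm_ge0.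
Qed.

Lemma J_mem {Y : nspace R} {y} : nice Y -> nmem Y y ->
  dual_mem (dual Y) (bidual_emb Y y).
Proof.
move=> hY hy; split; first by [].
exists (nnorm Y y) => f hf /=; rewrite /bidual_emb mulrC.
exact: K.
Qed.

Lemma J_norm {Y : nspace R} {y} : nice Y -> nmem Y y ->
  dual_norm (dual Y) (bidual_emb Y y) <= nnorm Y y.
Proof.
move=> hY hy; have [_ _ _ hn] := hY.
apply: sup_le (hn _ hy) => _ [g [hg1 hg2] <-].
rewrite /bidual_emb; apply: (le_trans (K hY hg1 hy)).
by apply: ler_piMl; [exact: hn | exact: hg2].
Qed.

Lemma H {Y : nspace R} {Psi} : nice Y -> dual_ball (dual (dual Y)) Psi ->
  dual_ball Y (Psi \o bidual_emb Y).
Proof.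
move=> hY [hPm hPn].
have hY1 := nice_dual hY; have hY2 := nice_dual hY1.
have [h0 hc hs hn] := hY; have [h01 hc1 hs1 hn1] := hY1;
  have [h02 hc2 hs2 hn2] := hY2.
have [hl _] := hPm.
have bnd : forall x, nmem Y x -> `|Psi (bidual_emb Y x)| <= nnorm Y x.
  move=> x hx; apply: (le_trans (K hY2 hPm (J_mem hY hx))).
  rewrite -[X in _ <= X]mul1r.
  apply: ler_pM.
  - exact: (dual_norm_ge0 hY2 hPm).
  - exact: (dual_norm_ge0 hY1 (J_mem hY hx)).
  - exact: hPn.
  - exact: J_norm.
split; last first.
  apply: sup_le => //= _ [x [hx1 hx2] <-].
  exact: le_trans (bnd _ hx1) hx2.
split; last by exists 1 => x hx; rewrite mul1r; apply: bnd.
move=> a x y hx hy /=.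
set A := bidual_emb Y (a *: x + y).
set B := a *: bidual_emb Y x + bidual_emb Y y.
have hA : nmem (dual (dual Y)) A by apply: J_mem => //; exact: hc.
have hB : nmem (dual (dual Y)) B by apply: hc2; apply: J_mem.
have hAB : nmem (dual (dual Y)) ((-1) *: B + A) by exact: hc2.
have eAB : A = 1 *: ((-1) *: B + A) + B by rewrite scale1r scaleN1r addrC addNKr.
have z : Psi ((-1) *: B + A) = 0.
  apply/normr0_eq0/eqP; rewrite eq_le normr_ge0 andbT.
  apply: le_trans (K hY2 hPm hAB) _.
  rewrite mulr_ge0_le0 //; first exact: dual_norm_ge0.
  apply: sup_le => //= _ [g [hg _] <-].
  have [hgl _] := hg.
  rewrite /A /B /bidual_emb !(evalE (dual Y)) hgl // /GRing.scale /=.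
  by rewrite mulN1r addNr normr0.
rewrite eAB hl // z /GRing.scale /= mul1r add0r.
by rewrite hl //; apply: J_mem.
Qed.


Lemma W1 {Y : nspace R} {r ys C} : nice Y -> weak_bound Y r ys C ->
  weak_bound (dual (dual Y)) r (bidual_emb Y \o ys) C.
Proof. by move=> hY hw Psi hP; exact: (hw _ (H hY hP)). Qed.

Lemma J_ball {Y : nspace R} {f} : nice Y -> dual_ball Y f ->
  dual_ball (dual (dual Y)) (bidual_emb (dual Y) f).
Proof.
move=> hY [hf1 hf2]; have hY1 := nice_dual hY; split.
  exact: J_mem.
exact: (le_trans (J_norm hY1 hf1)).
Qed.

Lemma W2 {Y : nspace R} {r z C} : nice Y ->
  weak_bound (dual (dual Y)) r (bidual_emb Y \o z) C -> weak_bound Y r z C.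
Proof. by move=> hY hw f hf; exact: (hw _ (J_ball hY hf)). Qed.

Lemma nice_b (F : normedModType R) : nice (bspace F).
Proof.
split => //= a x _; by rewrite normrZ.
Qed.

End S.

Theorem proposition2p8 (R : realType) (p q : R) (hq : 1 <= q) (hqp : q <= p) :
  (* Pi^mid_{p;q} is injective *)
  (forall (E F G : completeNormedModType R) (u : E -> F) (v : F -> G),
     bop (bspace E) (bspace F) u ->
     metric_injection (bspace F) (bspace G) v ->
     abs_mid_summing p q (bspace E) (bspace G) (v \o u) ->
     abs_mid_summing p q (bspace E) (bspace F) u) /\
  (* W^mid_{p;q} is regular *)
  (forall (E F : completeNormedModType R) (u : E -> F),
     bop (bspace E) (bspace F) u ->
     weak_mid_summing p q (bspace E) (dual (dual (bspace F)))
       (bidual_emb (bspace F) \o u) ->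
     weak_mid_summing p q (bspace E) (bspace F) u) /\
  (* D^mid_p is regular *)
  (forall (E F : completeNormedModType R) (u : E -> F),
     bop (bspace E) (bspace F) u ->
     cohen_mid_summing p (bspace E) (dual (dual (bspace F)))
       (bidual_emb (bspace F) \o u) ->
     cohen_mid_summing p (bspace E) (bspace F) u).
Proof.
split; [|split].
- move=> E F G u v hu [hv hvn] [_ hvu]; split => // x hx.
  have [_ [M hM]] := hvu x hx; split => //; exists M => N.
  apply: le_trans (hM N); rewrite le_eqVlt; apply/orP; left; apply/eqP.
  by apply: eq_bigr => j _; have /= := hvn (u (x j)) I; rewrite /= => ->.
- move=> E F u hu [_ hJ]; split => // x hx.
  have hF := nice_b F; have hF1 := nice_dual hF.
  have [[_ [C hC]] hmid] := hJ x hx.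
  split; first by split => //; exists C; exact: (W2 hF hC).
  move=> xs [hxm [D hD]].
  have [|M hM] := hmid (bidual_emb (dual (bspace F)) \o xs).
    split; first by move=> n; exact: (J_mem hF1 (hxm n)).
    by exists D; exact: (W1 hF1 hD).
  by exists M.
- move=> E F u hu [_ hJ]; split => // x hx.
  have hF := nice_b F; have hF1 := nice_dual hF.
  have [_ [M hM]] := hJ x hx; split => //; exists M => ys [hym [D hD]] hwb N.
  apply: (hM (bidual_emb (dual (bspace F)) \o ys) _ _ N).
    split; first by move=> n; exact: (J_mem hF1 (hym n)).
    by exists D; exact: (W1 hF1 hD).
  exact: (W1 hF1 hwb).
Qed.
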